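(* Let $\mathcal{O}$ be an oriented matroid on $E$, let $f,g,h\in E$ be pairwise distinct, and let $X,Y$ be comodular cocircuits with $X_g=Y_g\neq 0$ and $X_f=Y_f\neq 0$. If $X\leftrightarrow_{g,f}Y$, then $X\to_{g,h}Y$ implies $X\to_{f,h}Y$.
   Context: Oriented matroid $\mathcal{O}$ of rank $r$ on finite $E$, given by its cocircuits (sign vectors in $\{+,-,0\}^E$). Notation: $z(X)$ zero set, $\operatorname{sep}(X,Y)=\{e:X_e=-Y_e\neq 0\}$, composition $(X\circ Y)_e=X_e$ if $X_e\ne0$, else $Y_e$. An edge is a covector whose zero set is a flat of rank $r-2$; cocircuits $X\neq\pm Y$ are comodular if $X\circ Y$ is an edge. For comodular $X,Y$ and $e\in\operatorname{sep}(X,Y)$, cocircuit elimination of $e$ between $X$ and $Y$ yields the unique cocircuit $Z$ with $Z_e=0$ and $Z_h=(X\circ Y)_h$ for $h\notin\operatorname{sep}(X,Y)$. For distinct $a,b\in E$ and comodular $X,Y$ with $X_a=Y_a\ne0$, let $Z$ be obtained by eliminating $a$ between $-X$ and $Y$; write $X\to_{a,b}Y$ if $Z_b=+$, $X\leftarrow_{a,b}Y$ if $Z_b=-$, $X\leftrightarrow_{a,b}Y$ if $Z_b=0$. *)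

(* Defs.v *)
From HB Require Import structures.
From mathcomp Require Import all_boot.
Set Implicit Arguments. Unset Strict Implicit. Unset Printing Implicit Defensive.

Inductive sign := Zero | Plus | Minus.

Definition sign_to (s : sign) : option bool :=
  match s with Zero => None | Plus => Some true | Minus => Some false end.
Definition sign_of (o : option bool) : sign :=
  match o with None => Zero | Some true => Plus | Some false => Minus end.
Lemma sign_toK : cancel sign_to sign_of. Proof. by case. Qed.
HB.instance Definition _ := Finite.copy sign (can_type sign_toK).

Definition sopp (s : sign) : sign :=
  match s with Zero => Zero | Plus => Minus | Minus => Plus end.

Section SignVectors.
Variable E : finType.
Notation svec := {ffun E -> sign}.

Definition svzero : svec := [ffun _ => Zero].
Definition svopp (X : svec) : svec := [ffun e => sopp (X e)].
Definition comp (X Y : svec) : svec :=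
  [ffun e => if X e == Zero then Y e else X e].
Definition zero (X : svec) : {set E} := [set e | X e == Zero].
Definition supp (X : svec) : {set E} := [set e | X e != Zero].
Definition pos (X : svec) : {set E} := [set e | X e == Plus].
Definition neg (X : svec) : {set E} := [set e | X e == Minus].
Definition sep (X Y : svec) : {set E} :=
  [set e | (X e != Zero) && (X e == sopp (Y e))].

(* Cocircuit axioms of an oriented matroid on E. *)
Definition oriented_matroid (C : {set svec}) : Prop :=
  [/\ svzero \notin C,
      (forall X, X \in C -> svopp X \in C),
      (forall X Y, X \in C -> Y \in C -> supp X \subset supp Y ->
          X = Y \/ X = svopp Y)
    & (forall X Y e, X \in C -> Y \in C -> X <> svopp Y -> e \in sep X Y ->
          exists2 Z, Z \in C &
            [/\ Z e = Zero, pos Z \subset pos X :|: pos Y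
              & neg Z \subset neg X :|: neg Y])].

Definition covector (C : {set svec}) (T : svec) : Prop :=
  exists s : seq svec, all (mem C) s /\ T = foldr comp svzero s.

Definition flat (C : {set svec}) (F : {set E}) : Prop :=
  exists2 S : {set svec}, S \subset C & F = \bigcap_(X in S) zero X.

Definition chain_below (C : {set svec}) (F : {set E}) (n : nat) : Prop :=
  exists s : seq {set E}, [/\ size s = n, (forall G, G \in s -> flat C G)
     & sorted (fun A B : {set E} => A \proper B) (rcons s F)].

Definition flat_rank (C : {set svec}) (F : {set E}) (k : nat) : Prop :=
  [/\ flat C F, chain_below C F k & forall n, chain_below C F n -> n <= k].

Definition om_rank (C : {set svec}) (r : nat) : Prop := flat_rank C setT r.

Definition edge (C : {set svec}) (T : svec) : Prop :=
  covector C T /\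
  exists r, om_rank C r.+2 /\ flat_rank C (zero T) r.

Definition comodular (C : {set svec}) (X Y : svec) : Prop :=
  [/\ X \in C, Y \in C, X <> Y, X <> svopp Y & edge C (comp X Y)].

Definition elim_result (C : {set svec}) (X Y : svec) (e : E) (Z : svec) : Prop :=
  [/\ Z \in C, Z e = Zero
    & forall h, h \notin sep X Y -> Z h = comp X Y h].

Definition arrow_to (C : {set svec}) (a b : E) (X Y : svec) : Prop :=
  exists Z, elim_result C (svopp X) Y a Z /\ Z b = Plus.
Definition arrow_from (C : {set svec}) (a b : E) (X Y : svec) : Prop :=
  exists Z, elim_result C (svopp X) Y a Z /\ Z b = Minus.
Definition arrow_both (C : {set svec}) (a b : E) (X Y : svec) : Prop :=
  exists Z, elim_result C (svopp X) Y a Z /\ Z b = Zero.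

End SignVectors.

(* Main.v *)
Require Import Defs.
From HB Require Import structures.
From mathcomp Require Import all_boot.

Section Aux.
Context {E : finType}.
Implicit Types (C : {set {ffun E -> sign}}) (X Y Z : {ffun E -> sign}).

Lemma sorted_rcons2 (T : Type) (r : rel T) s a b :
  sorted r (rcons s a) -> r a b -> sorted r (rcons (rcons s a) b).
Proof.
case: s => [|x s] /=; first by move=> _ ->.
by move=> H1 H2; rewrite rcons_path H1 last_rcons.
Qed.

Lemma zero_sub_eq C Z1 Z2 : oriented_matroid C -> Z1 \in C -> Z2 \in C ->
  zero Z1 \subset zero Z2 -> Z2 = Z1 \/ Z2 = svopp Z1.
Proof.
case=> _ _ ax3 _ h1 h2 sub; apply: ax3 => //.
apply/subsetP => e; rewrite !inE => ne; apply: contra ne => /eqP z.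
by have := subsetP sub e; rewrite !inE z eqxx => /(_ isT).
Qed.

Lemma uniq_elim C X Y g Z1 Z2 : oriented_matroid C -> comodular C X Y ->
  X g != Zero ->
  elim_result C (svopp X) Y g Z1 -> elim_result C (svopp X) Y g Z2 -> Z1 = Z2.
Proof.
move=> om [hX hY nXY nXY' [_ [r [[_ _ rk] [flT [s [sz sflat ssort]] _]]]]] Xg
  [C1 g1 a1] [C2 g2 a2].
have om' := om; case: om' => z0 _ ax3 _.
set T := zero (Defs.comp X Y) in flT ssort.
have zT Z : (forall h, h \notin sep (svopp X) Y -> Z h = Defs.comp (svopp X) Y h) ->
    T \subset zero Z.
  move=> a; apply/subsetP => e; rewrite !inE ffunE.
  case Xe0: (X e == Zero) => /eqP Ye; last by rewrite Ye eqxx in Xe0.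
  move/eqP: Xe0 => Xe.
  rewrite a; last by rewrite !inE ffunE Xe.
  by rewrite ffunE ffunE Xe /= Ye.
have gT : g \notin T by rewrite !inE ffunE (negbTE Xg).
have main : Z2 = Z1 \/ Z2 = svopp Z1.
  apply: (zero_sub_eq _ _ _ om C1 C2).
  apply/idPn => nsub; exfalso.
  set F := zero Z1 :&: zero Z2.
  have TF : T \proper F.
    rewrite properE subsetI (zT _ a1) (zT _ a2) /=.
    apply/negP => /subsetP /(_ g); rewrite !inE g1 g2 => /(_ isT).
    by move=> H; move: gT; rewrite inE H.
  have FZ : F \proper zero Z1.
    rewrite properE subsetIl /=; apply: contra nsub => /subsetP H.
    by apply/subsetP => e /H; rewrite inE => /andP[].
  have ZT : zero Z1 \proper setT.
    rewrite properE subsetT /=; apply: contra z0 => /subsetP H.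
    suff -> : svzero E = Z1 by [].
    apply/ffunP => e; rewrite ffunE; have := H e; rewrite !inE => /(_ isT).
    by move/eqP.
  have fl1 : flat C (zero Z1).
    by exists [set Z1]; [rewrite sub1set | rewrite big_set1].
  have flF : flat C F.
    exists [set Z1; Z2]; first by rewrite subUset !sub1set C1 C2.
    apply/setP => e; rewrite !inE; apply/andP/bigcapP.
      by case=> h1 h2 i; rewrite !inE => /orP[] /eqP ->.
    move=> H; have h1 := H Z1; have h2 := H Z2; rewrite !inE !eqxx ?orbT in h1 h2.
    by split; [apply: h1 | apply: h2].
  suff : chain_below C setT (size (rcons (rcons (rcons s T) F) (zero Z1))).
    by move/rk; rewrite !size_rcons sz ltnn.
  exists (rcons (rcons (rcons s T) F) (zero Z1)).
  split => //.
    move=> G; rewrite !mem_rcons !in_cons.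
    case/orP => [/eqP->//|]; rewrite mem_rcons in_cons; case/orP => [/eqP->//|].
    rewrite mem_rcons in_cons; case/orP => [/eqP->//|].
    exact: sflat.
  by do 3! apply: sorted_rcons2 => //.
have [e [Xe Ye]] : exists e, X e = Zero /\ Y e != Zero.
  have : ~~ (supp Y \subset supp X).
    apply/negP => sub; case: (ax3 _ _ hY hX sub) => [/esym//|YX].
    by apply: nXY'; rewrite YX; apply/ffunP => e; rewrite !ffunE; case: (X e).
  case/subsetPn => e; rewrite !inE => Ye /negPn /eqP Xe; by exists e.
have ns : e \notin sep (svopp X) Y by rewrite !inE ffunE Xe.
case: main => [//|Z21].
have := a2 _ ns; rewrite Z21 ffunE a1 // !ffunE Xe /=.
by case: (Y e) Ye.
Qed.
End Aux.
Arguments uniq_elim {E C X Y g Z1 Z2}.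

Theorem proposition2p4 (E : finType) (C : {set {ffun E -> sign}})
  (f g h : E) (X Y : {ffun E -> sign}) :
  oriented_matroid C ->
  f != g -> g != h -> f != h ->
  comodular C X Y ->
  X g = Y g -> X g != Zero ->
  X f = Y f -> X f != Zero ->
  arrow_both C g f X Y ->
  arrow_to C g h X Y -> arrow_to C f h X Y.
Proof.
move=> om _ _ _ cm _ Xg _ _ [Z1 [e1 Z1f]] [Z2 [e2 Z2h]].
have E12 := uniq_elim om cm Xg e1 e2.
exists Z1; split; last by rewrite E12.
by case: e1 => a _ c; split.
Qed.
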